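(* Let $G$ be an amenable locally compact group with left Haar measure $m$. If $(A_i)_{i\in\mathbb I}$ is a Følner net and $L\subseteq G$ is a compact symmetric unit neighborhood, then $(LA_i)_{i\in\mathbb I}$ is a strong Følner net.
   Context: $\mathcal K$: nonempty compact subsets of $G$; $\mathcal K_p$: those of positive Haar measure. Nets are indexed by a directed partially ordered set $(\mathbb I,\prec)$. For $K,A\subseteq G$: Følner boundary $\delta^KA=KA\,\triangle\, A$; strong Følner boundary $\partial_K A=K^{-1}A\cap K^{-1}(G\setminus A)$. A Følner net is a net $(A_i)$ in $\mathcal K_p$ with $\lim_i m(\delta^KA_i)/m(A_i)=0$ for every $K\in\mathcal K$; a strong Følner net is a net $(A_i)$ in $\mathcal K_p$ with $\lim_i m(\partial_KA_i)/m(A_i)=0$ for every $K\in\mathcal K$. $G$ is amenable if it admits a left-invariant mean on $L^\infty(G)$. *)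

(* Defs.v *)
From HB Require Import structures.
From mathcomp Require Import all_boot all_order all_algebra.
From mathcomp Require Import all_classical all_reals all_analysis.
Set Implicit Arguments. Unset Strict Implicit. Unset Printing Implicit Defensive.
Import Order.TTheory GRing.Theory Num.Theory.
Import numFieldNormedType.Exports.
Local Open Scope classical_set_scope.
Local Open Scope ring_scope.

Section TopGroup.
Variables (G : ptopologicalType) (mul : G -> G -> G) (inv : G -> G) (one : G).

Definition is_topological_group : Prop :=
  [/\ (forall x y z, mul x (mul y z) = mul (mul x y) z),
      (forall x, mul one x = x /\ mul x one = x),
      (forall x, mul (inv x) x = one /\ mul x (inv x) = one),
      continuous (fun p : G * G => mul p.1 p.2) &
      continuous inv].

Definition is_locally_compact_group : Prop :=
  [/\ is_topological_group, hausdorff_space G & locally_compact [set: G]].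

Definition setmul (K A : set G) : set G :=
  [set z | exists k a, K k /\ A a /\ z = mul k a].
Definition setinv (K : set G) : set G := inv @` K.
Definition ltrans (x : G) (A : set G) : set G := mul x @` A.

Definition folner_bd (K A : set G) : set G :=
  (setmul K A `\` A) `|` (A `\` setmul K A).
Definition strong_folner_bd (K A : set G) : set G :=
  setmul (setinv K) A `&` setmul (setinv K) (~` A).
End TopGroup.

Notation borel G := (g_sigma_algebraType (@open G)).

Section Haar.
Variables (R : realType) (G : ptopologicalType) (mul : G -> G -> G)
  (mu : {measure set (borel G) -> \bar R}).
Local Open Scope ereal_scope.

Definition is_left_haar_measure : Prop :=
  [/\ (forall (x : G) (A : set (borel G)), measurable A ->
          mu (ltrans mul x A) = mu A),
      (forall K : set G, compact K -> mu K < +oo),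
      (forall U : set G, open U -> U !=set0 -> 0 < mu U),
      (forall A : set (borel G), measurable A ->
          mu A = ereal_inf [set mu U | U in [set U : set G | open U /\ A `<=` U]]) &
      (forall U : set G, open U ->
          mu U = ereal_sup [set mu K | K in [set K : set G | compact K /\ K `<=` U]])].
End Haar.

Section Amenable.
Variables (R : realType) (G : ptopologicalType) (mul : G -> G -> G)
  (inv : G -> G) (mu : {measure set (borel G) -> \bar R}).

(* f is (a representative of) an element of L^oo(G, m) *)
Definition ess_bounded (f : borel G -> R) : Prop :=
  measurable_fun [set: borel G] f /\
  exists M : R, {ae mu, forall x, `|f x| <= M}.

Definition is_left_invariant_mean (M : (borel G -> R) -> R) : Prop :=
  (forall f g, ess_bounded f -> ess_bounded g ->
         {ae mu, forall x, f x = g x} -> M f = M g) /\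
  [/\
      (forall f g, ess_bounded f -> ess_bounded g -> M (f \+ g) = M f + M g),
      (forall (c : R) f, ess_bounded f -> M (fun x => c * f x) = c * M f),
      (forall f, ess_bounded f -> {ae mu, forall x, 0 <= f x} -> 0 <= M f),
      M (fun _ => 1) = 1 &
      (forall (x : G) f, ess_bounded f -> M (fun y => f (mul (inv x) y)) = M f)].

Definition amenable : Prop := exists M, is_left_invariant_mean M.
End Amenable.

Definition directed_poset (I : Type) (le : I -> I -> Prop) : Prop :=
  [/\ inhabited I,
      (forall i, le i i),
      (forall i j k, le i j -> le j k -> le i k),
      (forall i j, le i j -> le j i -> i = j) &
      (forall i j, exists k, le i k /\ le j k)].

Definition net_to0 (R : realType) (I : Type) (le : I -> I -> Prop) (a : I -> R)
  : Prop :=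
  forall eps : R, 0 < eps -> exists i0, forall i, le i0 i -> `|a i| < eps.

Section Folner.
Variables (R : realType) (G : ptopologicalType) (mul : G -> G -> G)
  (inv : G -> G) (mu : {measure set (borel G) -> \bar R}).

Definition nonempty_compact (K : set G) : Prop := compact K /\ K !=set0.
Definition compact_pos (A : set G) : Prop :=
  nonempty_compact A /\ (0 < mu A)%E.

Definition folner_net (I : Type) (le : I -> I -> Prop) (A : I -> set G) : Prop :=
  (forall i, compact_pos (A i)) /\
  forall K : set G, nonempty_compact K ->
    net_to0 le (fun i => fine (mu (folner_bd mul K (A i))) / fine (mu (A i))).

Definition strong_folner_net (I : Type) (le : I -> I -> Prop) (A : I -> set G)
  : Prop :=
  (forall i, compact_pos (A i)) /\
  forall K : set G, nonempty_compact K ->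
    net_to0 le (fun i =>
      fine (mu (strong_folner_bd mul inv K (A i))) / fine (mu (A i))).
End Folner.

(* Main.v *)
Require Import Defs.
From HB Require Import structures.
From mathcomp Require Import all_boot all_order all_algebra.
From mathcomp Require Import all_classical all_reals all_analysis.
Import Order.TTheory GRing.Theory Num.Theory.
Local Open Scope classical_set_scope.
Local Open Scope ring_scope.

Lemma cont_mulr (G : ptopologicalType) (mul : G -> G -> G) (c : G) :
  continuous (fun p : G * G => mul p.1 p.2) -> continuous (fun y => mul y c).
Proof.
move=> hm x.
have hp : (fun y : G => (y, c)) @ x --> (x, c).
  apply: cvg_pair.
  all: try exact: cvg_id.
  all: try exact: cvg_cst.
exact: (cvg_comp _ _ hp (hm (x, c))).
Qed.

Lemma cont_mull (G : ptopologicalType) (mul : G -> G -> G) (c : G) :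
  continuous (fun p : G * G => mul p.1 p.2) -> continuous (fun y => mul c y).
Proof.
move=> hm x.
have hp : (fun y : G => (c, y)) @ x --> (c, x).
  apply: cvg_pair.
  all: try exact: cvg_id.
  all: try exact: cvg_cst.
exact: (cvg_comp _ _ hp (hm (c, x))).
Qed.

Lemma compact_setmul (G : ptopologicalType) (mul : G -> G -> G) (X Y : set G) :
  continuous (fun p : G * G => mul p.1 p.2) -> compact X -> compact Y ->
  compact (setmul mul X Y).
Proof.
move=> hm cX cY.
have -> : setmul mul X Y = (fun p : G * G => mul p.1 p.2) @` (X `*` Y).
  apply/seteqP; split => z.
    by case=> k [a [Xk [Ya ->]]]; exists (k, a).
  by case=> [[k a] [/= Xk Ya] <-]; exists k, a.
apply: continuous_compact => //; first exact: continuous_subspaceT.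
exact: compact_setX.
Qed.

Lemma compact_setinv (G : ptopologicalType) (inv : G -> G) (X : set G) :
  continuous inv -> compact X -> compact (setinv inv X).
Proof.
move=> hi cX; apply: continuous_compact => //; exact: continuous_subspaceT.
Qed.

Lemma open_meas (G : ptopologicalType) (U : set G) : open U -> measurable (U : set (borel G)).
Proof. by move=> oU; apply: sub_sigma_algebra. Qed.

Lemma closed_meas (G : ptopologicalType) (U : set G) : closed U -> measurable (U : set (borel G)).
Proof.
move=> cU; rewrite -[U]setCK; apply: measurableC; apply: open_meas.
by rewrite openC.
Qed.

Lemma cover_K (G : ptopologicalType) (mul : G -> G -> G) (inv : G -> G) (one : G)
  (K L : set G) :
  is_topological_group mul inv one -> compact K -> nbhs one L ->
  exists s : seq G, (forall k, k \in s -> K k) /\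
     forall k, K k -> exists2 j, j \in s & L (mul k (inv j)).
Proof.
case=> _ _ hinv hm _ cK hL.
move: cK; rewrite compact_cover => /(_ G K (fun j => (fun y => mul y (inv j)) @^-1` L°)).
case.
- move=> j _; apply: (proj1 (continuousP _) (@cont_mulr G mul (inv j) hm)).
  exact: open_interior.
- move=> k Kk; exists k => //=.
  by rewrite (proj2 (hinv k)); exact: nbhs_singleton (nbhs_interior hL).
move=> D' sD' cov; exists (finmap.enum_fset D'); split.
  by move=> k kD; apply: set_mem; apply: sD'; exact: kD.
move=> k /cov [j /= jD Lj]; exists j => //.
exact: interior_subset.
Qed.

Lemma ratio_bound (R : realType) (X Y D Am : \bar R) (n : nat) :
  (0 <= X)%E -> (X <= (D *+ n)%R)%E -> (D < +oo)%E -> (0 <= D)%E ->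
  (0 < Am)%E -> (Am <= Y)%E -> (Y < +oo)%E ->
  `|fine X / fine Y| <= (fine D / fine Am) *+ n.
Proof.
case: D => [d| |] //= hX hXd _ hd.
case: Am => [am| |] //= ham; last first.
  by case: Y => [y| |] //=; rewrite leNgt ltey.
case: Y => [y| |] //= hy _.
move: hX hXd.
have -> : (d%:E *+ n)%R = (d *+ n)%:E.
  by elim: n => [|n IH]; rewrite ?mulr0n // !mulrS EFinD IH.
case: X => [x| |] //= hx.

rewrite !lee_fin in hd hx hy *; rewrite lte_fin in ham.
move=> hxd.
have hy0 : 0 < y by exact: (lt_le_trans ham hy).
rewrite ger0_norm; last by rewrite divr_ge0 // ltW.
apply: (@le_trans _ _ (x / am)).
  by apply: ler_wpM2l => //; rewrite lef_pV2.
rewrite -mulrnAl; apply: ler_wpM2r => //.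
by rewrite invr_ge0 ltW.
Qed.

Set Implicit Arguments. Unset Strict Implicit.

Definition badset (G : ptopologicalType) (mul : G -> G -> G) (A : set G) (s : seq G) : set G :=
  [set z | A z /\ exists2 k, k \in s & ~ A (mul k z)].

Lemma bad_bound (R : realType) (G : ptopologicalType) (mul : G -> G -> G)
  (mu : {measure set (borel G) -> \bar R}) (A K' : set G) (s : seq G) :
  continuous (fun p : G * G => mul p.1 p.2) ->
  is_left_haar_measure mul mu ->
  hausdorff_space G -> compact A -> (forall k, k \in s -> K' k) ->
  measurable (setmul mul K' A `\` A : set (borel G)) ->
  measurable (badset mul A s : set (borel G)) /\
  (mu (badset mul A s) <= ((mu (setmul mul K' A `\` A)) *+ size s)%R)%E.
Proof.
move=> hm [hinvar _ _ _ _] hG cpA sK mB.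
have cA : closed A by exact: compact_closed.
elim: s sK => [|k s IH] sK.
  have -> : badset mul A [::] = set0.
    by apply/seteqP; split => z // [_ [k]].
  by split; [exact: measurable0 | rewrite measure0].
have [mS leS] : measurable (badset mul A s : set (borel G)) /\
  (mu (badset mul A s) <= ((mu (setmul mul K' A `\` A)) *+ size s)%R)%E.
  by apply: IH => j js; apply: sK; rewrite inE js orbT.
set E := A `&` (mul k @^-1` ~` A).
have mE : measurable (E : set (borel G)).
  apply: measurableI; first exact: closed_meas.
  apply: open_meas; apply: (proj1 (continuousP _) (@cont_mull G mul k hm)).
  by rewrite openC.
have -> : badset mul A (k :: s) = E `|` badset mul A s.
  apply/seteqP; split => z.
    case=> Az [j]; rewrite inE => /orP [/eqP -> nA| js nA].
      by left.
    by right; split => //; exists j.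
  case=> [[Az nA] | [Az [j js nA]]]; split => //.
    by exists k => //; rewrite inE eqxx.
  by exists j => //; rewrite inE js orbT.
split; first exact: measurableU.
apply: (le_trans (measureU2 _ mE mS)).
have -> : size (k :: s) = (size s).+1 by [].
rewrite GRing.mulrS; apply: leeD => //.
suff h1 : (mu E <= mu (setmul mul K' A `\` A))%E by exact: h1.
rewrite -(hinvar k E mE).
apply: le_measure; rewrite ?inE //.
  have -> : ltrans mul k E = (mul k @` A) `\` A.
    apply/seteqP; split => y.
      by case=> z [Az nA] <-; split => //; exists z.
    by case=> [[z Az <-] nA]; exists z.
  apply: measurableD; apply: closed_meas; apply: compact_closed => //.
  by apply: continuous_compact => //; apply: continuous_subspaceT; exact: cont_mull.
move=> y [z [Az nA] <-]; split => //.
exists k, z; split => //; apply: sK; by rewrite inE eqxx.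
Qed.

Lemma setmul_invC (G : ptopologicalType) (mul : G -> G -> G) (inv : G -> G) (one : G)
  (K B : set G) :
  is_topological_group mul inv one ->
  setmul mul (setinv inv K) (~` B) = \bigcup_(k in K) (mul k @^-1` ~` B).
Proof.
case=> assoc unit hinv _ _.
apply/seteqP; split => z.
  case=> _ [y [[k Kk <-] [nB ->]]].
  exists k => //=; rewrite assoc (proj2 (hinv k)) (proj1 (unit y)); exact: nB.
case=> k Kk /= nB; exists (inv k), (mul k z); split; first by exists k.
split => //; rewrite assoc (proj1 (hinv k)) (proj1 (unit z)) //.
Qed.

Lemma natmul_le (R : realType) (x y : \bar R) (n : nat) :
  (0 <= x)%E -> (x <= y)%E -> ((x *+ n)%R <= (y *+ n)%R)%E.
Proof.
move=> x0 xy; elim: n => [|n IH]; first by rewrite !mulr0n.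
by rewrite !mulrS; apply: leeD.
Qed.

Unset Implicit Arguments. Set Strict Implicit.

Theorem proposition5p9 (R : realType) (G : ptopologicalType)
  (mul : G -> G -> G) (inv : G -> G) (one : G)
  (mu : {measure set (borel G) -> \bar R})
  (I : Type) (le : I -> I -> Prop) (A : I -> set G) (L : set G) :
  is_locally_compact_group mul inv one ->
  is_left_haar_measure mul mu ->
  amenable mul inv mu ->
  directed_poset le ->
  folner_net mul mu le A ->
  compact L -> setinv inv L = L -> nbhs one L ->
  strong_folner_net mul inv mu le (fun i => setmul mul L (A i)).
Proof.
move=> [hTG hG _] hH _ _ [hA hF] cL Linv hL.
have hTG' := hTG; case: hTG' => assoc unit hinv hm hi.
have hHaar := hH; case: hH => [_ hfin _ _ _].
have L1 : L one := nbhs_singleton hL.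
have cB : forall i, compact (setmul mul L (A i)).
  by move=> i; apply: compact_setmul => //; exact: (hA i).1.1.
have AB : forall i, A i `<=` setmul mul L (A i).
  by move=> i a Aa; exists one, a; split => //; split => //; rewrite (proj1 (unit a)).
have cmeas : forall X : set G, compact X -> measurable (X : set (borel G)).
  by move=> X cX; apply: closed_meas; exact: compact_closed.
have mAB : forall i, (mu (A i) <= mu (setmul mul L (A i)))%E.
  move=> i; apply: le_measure; rewrite ?inE; [exact: cmeas (hA i).1.1 | exact: cmeas | exact: AB].
split.
  move=> i; split; first split; first exact: cB.
    by case: (hA i).1.2 => a Aa; exists a; exact: AB.
  exact: lt_le_trans (hA i).2 (mAB i).
move=> K [cK [k0 Kk0]].
have [s [sK covK]] := @cover_K G mul inv one K L hTG cK hL.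
set K' := setmul mul (setinv inv K) L `|` K.
have cK' : compact K'.
  by apply: compactU => //; apply: compact_setmul => //; exact: compact_setinv.
have net0 := hF K' (conj cK' (ex_intro _ k0 (or_intror Kk0))).
move=> eps heps.
have hn : 0 < eps / (size s).+1%:R by rewrite divr_gt0.
have [i0 Hi0] := net0 _ hn.
exists i0 => i /Hi0 hi0.
set a := A i.
have ca : compact a := (hA i).1.1.
have cKa : compact (setmul mul K' a) by exact: compact_setmul.
have mKa : measurable (setmul mul K' a `\` a : set (borel G)).
  by apply: measurableD; apply: cmeas.
have [mbad lebad] := @bad_bound R G mul mu a K' s hm hHaar hG ca
  (fun k ks => or_intror (sK k ks)) mKa.
set B := setmul mul L a.
have mbd : measurable (strong_folner_bd mul inv K B : set (borel G)).
  rewrite /strong_folner_bd (setmul_invC _ _ hTG).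
  apply: measurableI.
    by apply: cmeas; apply: compact_setmul => //; [exact: compact_setinv | exact: cB].
  apply: open_meas; apply: bigcup_open => k _.
  apply: (proj1 (continuousP _) (@cont_mull G mul k hm)).
  by rewrite openC; apply: compact_closed => //; exact: cB.
have sub : strong_folner_bd mul inv K B `<=` (setmul mul K' a `\` a) `|` badset mul a s.
  move=> z [z1 z2].
  have hz1 : setmul mul K' a z.
    case: z1 => _ [y [[k Kk <-] [By ->]]].
    case: By => l [a1 [Ll [aa1 ->]]].
    exists (mul (inv k) l), a1; split; last split => //.
    by left; exists (inv k), l; split => //; exists k.
  move: z2; rewrite (setmul_invC _ _ hTG); case=> k Kk /= nB.
  case: (pselect (a z)) => az; last by left.
  case: (pselect (exists2 j, j \in s & ~ a (mul j z))) => hb; first by right.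
  exfalso; apply: nB.
  have [j js Lj] := covK k Kk.
  have aj : a (mul j z) by apply: contrapT => naj; apply: hb; exists j.
  exists (mul k (inv j)), (mul j z); split => //; split => //.
  by rewrite -assoc [mul (inv j) _]assoc (proj1 (hinv j)) (proj1 (unit z)).
have hX : (mu (strong_folner_bd mul inv K B) <=
    ((mu (setmul mul K' a `\` a)) *+ (size s).+1)%R)%E.
  apply: (@le_trans _ _ (mu ((setmul mul K' a `\` a) `|` badset mul a s))).
    by apply: le_measure; rewrite ?inE //; exact: measurableU.
  apply: le_trans (measureU2 _ mKa mbad) _.
  by rewrite mulrS; apply: leeD.
have fbd_m : measurable (folner_bd mul K' a : set (borel G)).
  by apply: measurableU => //; apply: measurableD; apply: cmeas.
have hD : (mu (setmul mul K' a `\` a) <= mu (folner_bd mul K' a))%E.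
  by apply: le_measure; rewrite ?inE // => z h; left.
have Dfin : (mu (folner_bd mul K' a) < +oo)%E.
  apply: le_lt_trans (hfin _ (compactU cKa ca)).
  apply: le_measure; rewrite ?inE //; first by apply: measurableU; apply: cmeas.
  by move=> z [[h _]|[h _]]; [left|right].
have hr := @ratio_bound R (mu (strong_folner_bd mul inv K B)) (mu B)
  (mu (folner_bd mul K' a)) (mu a) (size s).+1 (measure_ge0 _ _)
  (le_trans hX (natmul_le _ (measure_ge0 _ _) hD)) Dfin (measure_ge0 _ _)
  (hA i).2 (mAB i) (hfin _ (cB i)).
apply: le_lt_trans hr _.
set r := fine (mu (folner_bd mul K' a)) / fine (mu a).
have hr' : r < eps / (size s).+1%:R by exact: le_lt_trans (ler_norm r) hi0.
rewrite -mulr_natr.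
have hN : 0 < ((size s).+1)%:R :> R by [].
rewrite -[eps](@divfK _ ((size s).+1)%:R); last by rewrite gt_eqF.
by rewrite ltr_pM2r.
Qed.
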